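(* Let $f \colon \mathbb{R}^d \to \mathbb{R}$ be $L$-smooth (possibly non-convex) and bounded below, and assume access to unbiased stochastic gradients $g(\omega)$, $\mathbb{E}\, g(\omega) = \nabla f(\omega)$, whose variance is bounded by $\sigma^2$. Then the Lookahead optimizer with hyperparameters $(k,\alpha)$, $k \ge 1$ and $\alpha \in (0,1]$, with its SGD stepsize $\gamma$ chosen appropriately (depending on $\alpha$), reaches $\mathbb{E}\|\nabla f(\omega_{\rm out})\|^2 \le \varepsilon$ after at most $$\mathcal{O}\left(\frac{\sigma^2}{\varepsilon^2} + \frac{1}{\varepsilon} + \frac{1-\alpha}{\alpha}\left(\frac{\sigma\sqrt{k-1}}{\varepsilon^{3/2}} + \frac{k}{\varepsilon}\right)\right)$$ iterations (stochastic gradient evaluations), where $\omega_{\rm out}$ denotes an iterate of the algorithm chosen uniformly at random.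
   Context: The Lookahead optimizer for minimizing $f$ maintains ''slow'' weights $\omega_t$. At each outer step $t$ it sets $\tilde\omega_{t} \leftarrow \omega_t$, performs $k$ SGD steps $\tilde\omega_{t+i} = \tilde\omega_{t+i-1} - \gamma\, g(\tilde\omega_{t+i-1})$, $i=1,\dots,k$ (so $\tilde\omega_{t+k} = \tilde\omega_t - \gamma\sum_{i=1}^k g(\tilde\omega_{t+i-1})$), and then updates $\omega_{t+1} = \omega_t + \alpha(\tilde\omega_{t+k} - \omega_t)$. Iterations are counted as the total number of stochastic gradient evaluations ($k$ per outer step). The $\mathcal{O}$-notation hides constants depending on $L$ and on the initial optimality gap $f(\omega_0) - \inf f$. The stepsize $\gamma$ is assumed to be optimally tuned for each choice of $\alpha$. *)

(* Defs.v *)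
From mathcomp Require Import all_boot all_order all_algebra.
From mathcomp Require Import all_classical all_reals all_analysis.
Import Order.TTheory GRing.Theory Num.Theory.

Set Implicit Arguments.
Unset Strict Implicit.
Unset Printing Implicit Defensive.

Local Open Scope ring_scope.
Local Open Scope classical_set_scope.

Section LookaheadDefs.
Variable R : realType.
Variable d : nat.

Definition dotv (u v : 'rV[R]_d) : R := \sum_(i < d) u ord0 i * v ord0 i.
Definition sqnorm (v : 'rV[R]_d) : R := dotv v v.
Definition enorm (v : 'rV[R]_d) : R := Num.sqrt (sqnorm v).

Definition is_gradient (f : 'rV[R]_d -> R) (gradf : 'rV[R]_d -> 'rV[R]_d) : Prop :=
  forall w : ('rV[R]_d : normedModType R),
    differentiable f w /\ forall h : 'rV[R]_d, 'd f w h = dotv (gradf w) h.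

Definition L_smooth (L : R) (f : 'rV[R]_d -> R) (gradf : 'rV[R]_d -> 'rV[R]_d) : Prop :=
  is_gradient f gradf /\
  forall x y : 'rV[R]_d, enorm (gradf x - gradf y) <= L * enorm (x - y).

Definition vopen (B : set 'rV[R]_d) : Prop := @open ('rV[R]_d : normedModType R) B.

(* Product sigma-algebra on Xi * R^d generated by rectangles
   (measurable set) x (open set), i.e. (sigma-algebra of Xi) (x) Borel(R^d). *)
Definition prod_gen (dX : measure_display) (Xi : measurableType dX)
  : set (set (Xi * 'rV[R]_d)) :=
  [set A `*` B | A in [set A : set Xi | measurable A] & B in [set B | vopen B]].

(* State s = (slow weights omega, current fast weights w~).
   n = number of gradient evaluations performed before this one. *)
Definition la_step (Xi : Type) (G : 'rV[R]_d -> Xi -> 'rV[R]_d)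
  (k : nat) (alpha gamma : R) (n : nat) (s : 'rV[R]_d * 'rV[R]_d) (xi : Xi)
  : 'rV[R]_d * 'rV[R]_d :=
  let w' := s.2 - gamma *: G s.2 xi in
  if (k %| n.+1)%N then
    let om := s.1 + alpha *: (w' - s.1) in (om, om)
  else (s.1, w').

(* la_expect mu G k alpha gamma h n m s =
   expectation of h(state after n further evaluations), starting from state s
   after m evaluations, each evaluation using a fresh independent sample
   xi ~ mu (iterated integrals = integral w.r.t. the product measure). *)
Fixpoint la_expect (dX : measure_display) (Xi : measurableType dX)
  (mu : probability Xi R) (G : 'rV[R]_d -> Xi -> 'rV[R]_d)
  (k : nat) (alpha gamma : R) (h : 'rV[R]_d * 'rV[R]_d -> \bar R)
  (n m : nat) (s : 'rV[R]_d * 'rV[R]_d) : \bar R :=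
  match n with
  | 0 => h s
  | n'.+1 => (\int[mu]_xi la_expect mu G k alpha gamma h n' m.+1
                               (la_step G k alpha gamma m s xi))%E
  end.

(* E ||grad f(omega_out)||^2 where omega_out is chosen uniformly at random
   among the T points w~_0, ..., w~_{T-1} at which the T stochastic gradients
   were evaluated, the run starting from omega_0 = w0. *)
Definition la_out_sqgrad (dX : measure_display) (Xi : measurableType dX)
  (mu : probability Xi R) (G : 'rV[R]_d -> Xi -> 'rV[R]_d)
  (gradf : 'rV[R]_d -> 'rV[R]_d)
  (k : nat) (alpha gamma : R) (w0 : 'rV[R]_d) (T : nat) : \bar R :=
  ((T%:R)^-1%:E *
   \sum_(n < T) la_expect mu G k alpha gamma
                  (fun s => (sqnorm (gradf s.2))%:E) n 0 (w0, w0))%E.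

End LookaheadDefs.

(* The complexity bound (without the hidden constant). *)
Definition la_bound (R : realType) (sigma eps alpha : R) (k : nat) : R :=
  sigma ^+ 2 / eps ^+ 2 + eps^-1
  + (1 - alpha) / alpha *
    (sigma * Num.sqrt (k.-1)%:R / (eps * Num.sqrt eps) + k%:R / eps).

(* Main.v *)
Require Import Defs.
From mathcomp Require Import all_boot all_order all_algebra.
From mathcomp Require Import all_classical all_reals all_analysis.
From mathcomp Require Import ring lra.
Import Order.TTheory GRing.Theory Num.Theory.
Local Open Scope ring_scope.
Local Open Scope classical_set_scope.


Section Vec.
Variable R : realType.
Variable d : nat.
Implicit Types u v w : 'rV[R]_d.

Lemma dotvC u v : dotv u v = dotv v u.
Proof. by apply: eq_bigr => i _; rewrite mulrC. Qed.

Lemma dotvDl u v w : dotv (u + v) w = dotv u w + dotv v w.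
Proof. by rewrite /dotv -big_split; apply: eq_bigr => i _; rewrite mxE mulrDl. Qed.

Lemma dotvZl (a : R) u w : dotv (a *: u) w = a * dotv u w.
Proof. by rewrite /dotv mulr_sumr; apply: eq_bigr => i _; rewrite mxE mulrA. Qed.

Lemma dotvNl u w : dotv (- u) w = - dotv u w.
Proof. by rewrite -scaleN1r dotvZl mulN1r. Qed.

Lemma dotvBl u v w : dotv (u - v) w = dotv u w - dotv v w.
Proof. by rewrite dotvDl dotvNl. Qed.

Lemma dotvDr u v w : dotv w (u + v) = dotv w u + dotv w v.
Proof. by rewrite dotvC dotvDl !(dotvC w). Qed.

Lemma dotvZr (a : R) u w : dotv w (a *: u) = a * dotv w u.
Proof. by rewrite dotvC dotvZl dotvC. Qed.

Lemma dotvBr u v w : dotv w (u - v) = dotv w u - dotv w v.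
Proof. by rewrite dotvC dotvBl !(dotvC w). Qed.

Lemma sqnorm_ge0 u : 0 <= sqnorm u.
Proof. by apply: sumr_ge0 => i _; rewrite -expr2 sqr_ge0. Qed.

Lemma sqnormD u v : sqnorm (u + v) = sqnorm u + 2 * dotv u v + sqnorm v.
Proof.
rewrite /sqnorm dotvDl !dotvDr (dotvC v u); ring.
Qed.

Lemma sqnormB u v : sqnorm (u - v) = sqnorm u - 2 * dotv u v + sqnorm v.
Proof.
rewrite /sqnorm dotvBl !dotvBr (dotvC v u); ring.
Qed.

Lemma sqnormZ (a : R) u : sqnorm (a *: u) = a ^+ 2 * sqnorm u.
Proof. by rewrite /sqnorm dotvZl dotvZr mulrA expr2. Qed.

Lemma sqnormN u : sqnorm (- u) = sqnorm u.
Proof. by rewrite -scaleN1r sqnormZ sqrrN expr1n mul1r. Qed.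

Lemma dotv_key (x y : R) u v :
  0 <= x ^+ 2 * sqnorm u + 2 * (x * y) * dotv u v + y ^+ 2 * sqnorm v.
Proof.
have := sqnorm_ge0 (x *: u + y *: v).
rewrite sqnormD !sqnormZ dotvZl dotvZr.
by rewrite (_ : x * (y * dotv u v) = (x * y) * dotv u v) ?mulrA.
Qed.

Lemma lip_sq (L : R) (f : 'rV[R]_d -> R) (gradf : 'rV[R]_d -> 'rV[R]_d) x y : L_smooth L f gradf -> 0 <= L ->
  sqnorm (gradf x - gradf y) <= L ^+ 2 * sqnorm (x - y).
Proof.
move=> [_ Hl] L0; have := Hl x y; rewrite /enorm => H.
have e1 : sqnorm (gradf x - gradf y) = (Num.sqrt (sqnorm (gradf x - gradf y))) ^+ 2.
  by rewrite sqr_sqrtr // sqnorm_ge0.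
have e2 : sqnorm (x - y) = (Num.sqrt (sqnorm (x - y))) ^+ 2.
  by rewrite sqr_sqrtr // sqnorm_ge0.
rewrite e1 e2 -exprMn; apply: lerXn2r => //; rewrite ?nnegrE ?mulr_ge0 ?sqrtr_ge0 //.
Qed.

End Vec.
Arguments dotvC {R d}. Arguments dotvDl {R d}. Arguments dotvZl {R d}. Arguments dotvNl {R d}.
Arguments dotvBl {R d}. Arguments dotvDr {R d}. Arguments dotvZr {R d}. Arguments dotvBr {R d}.
Arguments sqnorm_ge0 {R d}. Arguments sqnormD {R d}. Arguments sqnormB {R d}. Arguments sqnormZ {R d}.
Arguments sqnormN {R d}. Arguments dotv_key {R d}. Arguments lip_sq {R d}.


Section Descent.
Variable R : realType.
Variable d : nat.

Lemma line_derive (f : 'rV[R]_d -> R) (gradf : 'rV[R]_d -> 'rV[R]_d) (x v : 'rV[R]_d) (t : R) :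
  is_gradient f gradf ->
  is_derive t 1 (fun s : R => f (s *: v + x)) (dotv (gradf (t *: v + x)) v).
Proof.
move=> Hg.
have E : forall g : R -> R, (fun h : R => g (h *: (1:R) + t)) = (fun h : R => g (h + t)).
  by move=> g; apply: funext => h; rewrite [h *: _]mulr1.
have E2 : (fun h : R => f ((h + t) *: v + x)) = (fun h : R => f (h *: v + (t *: v + x))).
  by apply: funext => h; rewrite scalerDl addrA.
have [df dE] := Hg (t *: v + x).
have dv : derivable f (t *: v + x) v by exact: diff_derivable.
have Ed : derivable (fun s : R => f (s *: v + x)) t 1 = derivable f (t *: v + x) v.
  rewrite /derivable /comp /shift /=.
  rewrite (_ : (fun h : R => _) = (fun h : R => h^-1 *: (f (h *: v + (t *: v + x)) - f (t *: v + x)))) //.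
  apply: funext => h /=; rewrite addrA -scalerDl; congr (_ *: (f (_ *: _ + _) - _)); congr (_ + _); exact: mulr1.
have Ee : derive (fun s : R => f (s *: v + x)) t 1 = derive f (t *: v + x) v.
  rewrite /derive /comp /shift /=.
  rewrite (_ : (fun h : R => _) = (fun h : R => h^-1 *: (f (h *: v + (t *: v + x)) - f (t *: v + x)))) //.
  apply: funext => h /=; rewrite addrA -scalerDl; congr (_ *: (f (_ *: _ + _) - _)); congr (_ + _); exact: mulr1.
apply: DeriveDef; first by rewrite Ed.
by rewrite Ee deriveE // dE.
Qed.

Lemma descent (L : R) (f : 'rV[R]_d -> R) (gradf : 'rV[R]_d -> 'rV[R]_d) (x v : 'rV[R]_d) :
  L_smooth L f gradf -> 0 < L ->
  f (x + v) <= f x + dotv (gradf x) v + L * sqnorm v.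
Proof.
move=> HL L0; have Hg := HL.1.
pose phi := fun s : R => f (s *: v + x).
have D : forall t : R, is_derive t (1:R) phi (dotv (gradf (t *: v + x)) v).
  by move=> t; exact: line_derive.
have [c cI Hc] : exists2 c, c \in `]0, 1[%R &
    phi 1 - phi 0 = dotv (gradf (c *: v + x)) v * (1 - 0).
  apply: MVT => //.
  apply: derivable_within_continuous => t _.
  by have := D t => -[].
move: Hc; rewrite /phi scale1r scale0r add0r subr0 mulr1 (addrC v x) => Hc.
have c0 : 0 < c by move: cI; rewrite in_itv /= => /andP[].
have c1 : c < 1 by move: cI; rewrite in_itv /= => /andP[].
set a := gradf (c *: v + x) - gradf x.
have Ha : sqnorm a <= L ^+ 2 * (c ^+ 2 * sqnorm v).
  rewrite /a; have := lip_sq L f gradf (c *: v + x) x HL (ltW L0).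
  by rewrite addrK sqnormZ.
have K := dotv_key 1 (- L) a v.
have Hd : dotv (gradf (c *: v + x)) v = dotv (gradf x) v + dotv a v.
  by rewrite /a dotvBl; ring.
have sv := sqnorm_ge0 v.
have : dotv a v <= L * sqnorm v.
  have c2 : c ^+ 2 <= 1 by rewrite expr_le1 // ltW.
  have : L ^+ 2 * (c ^+ 2 * sqnorm v) <= L ^+ 2 * sqnorm v.
    rewrite ler_pM2l ?exprn_gt0 //; rewrite -[X in _ <= X]mul1r ler_wpM2r //.
  move: K; rewrite expr1n mul1r mul1r sqrrN => K H2.
  rewrite -(ler_pM2l L0); nra.
lra.
Qed.

End Descent.


Section LowerInt.
Local Open Scope ereal_scope.
Context (R : realType).

Lemma sup_add (A B : set (\bar R)) (c : \bar R) : A 0 -> B 0 ->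
  (forall x y, A x -> B y -> x + y <= c) -> ereal_sup A + ereal_sup B <= c.
Proof.
move=> A0 B0 H.
have Ha : ereal_sup A <= c.
  by apply: ge_ereal_sup => x Ax; rewrite -[x]adde0; exact: H.
have Hb : ereal_sup B <= c.
  by apply: ge_ereal_sup => y By; rewrite -[y]add0e; exact: H.
have a0 : 0 <= ereal_sup A by exact: ereal_sup_ubound.
have b0 : 0 <= ereal_sup B by exact: ereal_sup_ubound.
case: c H Ha Hb => [r| |] H Ha Hb; last 2 first.
- by rewrite leey.
- by move: (le_trans a0 Ha).
case Ea : (ereal_sup A) a0 Ha => [a'| |] // a0 Ha.
case Eb : (ereal_sup B) b0 Hb => [b'| |] // b0 Hb.
rewrite -EFinD lee_fin leNgt; apply/negP => hlt.
pose e := ((a' + b' - r) / 2)%R.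
have e0 : (0 < e)%R by rewrite /e; clear -hlt; lra.
have [x Ax hx] : exists2 x, A x & (a' - e)%:E < x.
  by apply: ereal_sup_gt; rewrite Ea lte_fin; clear -e0; lra.
have [y By hy] : exists2 y, B y & (b' - e)%:E < y.
  by apply: ereal_sup_gt; rewrite Eb lte_fin; clear -e0; lra.
have := lteD hx hy; have := H _ _ Ax By => h1 h2.
have := lt_le_trans h2 h1; rewrite -EFinD lte_fin /e => h3; clear -h3; lra.
Qed.

Context d (T : measurableType d) (mu : {measure set T -> \bar R}).

Lemma le_int_ge0 (f g : T -> \bar R) : (forall x, 0 <= f x) -> (forall x, f x <= g x) ->
  \int[mu]_x f x <= \int[mu]_x g x.
Proof.
move=> f0 fg; have g0 : forall x, 0 <= g x by move=> x; exact: le_trans (f0 x) (fg x).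
rewrite !ge0_integralTE //; apply: ereal_sup_le => _ [h hf <-].
by exists h => // x; exact: le_trans (hf x) (fg x).
Qed.

Import HBNNSimple.

Lemma int_superadd (f g : T -> \bar R) : (forall x, 0 <= f x) -> (forall x, 0 <= g x) ->
  \int[mu]_x f x + \int[mu]_x g x <= \int[mu]_x (f x + g x).
Proof.
move=> f0 g0; rewrite !ge0_integralTE //; last by move=> x; rewrite adde_ge0.
apply: sup_add.
- by exists nnsfun0 => //; exact: sintegral0.
- by exists nnsfun0 => //; exact: sintegral0.
move=> _ _ [h1 H1 <-] [h2 H2 <-]; apply: ereal_sup_ubound.
exists (add_nnsfun h1 h2) => [x|]; first by rewrite /= EFinD leeD.
by rewrite sintegralD.
Qed.

Lemma int_supersum (F : nat -> T -> \bar R) N : (forall j x, 0 <= F j x) ->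
  \sum_(j < N) \int[mu]_x F j x <= \int[mu]_x (\sum_(j < N) F j x).
Proof.
move=> F0; elim: N => [|N IH].
  by rewrite big_ord0; apply: integral_ge0 => x _; rewrite big_ord0.
rewrite big_ord_recr /=.
apply: le_trans (leeD IH (lexx _)) _.
have S0 : forall x, 0 <= \sum_(j < N) F j x by move=> x; apply: sume_ge0.
apply: le_trans (int_superadd (fun x => \sum_(j < N) F j x) (F N) S0 (F0 N)) _.
by apply: le_int_ge0 => [x|x]; [apply: adde_ge0|rewrite big_ord_recr].
Qed.

End LowerInt.


Section Sections.
Context (R : realType) (d : nat) (dX : measure_display) (Xi : measurableType dX).

Lemma section_meas (A : set (Xi * 'rV[R]_d)) : <<s @prod_gen R d dX Xi >> A ->
  forall w, measurable [set xi | A (xi, w)].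
Proof.
move=> HA w.
pose S := [set A : set (Xi * 'rV[R]_d) | measurable [set xi | A (xi, w)]].
suff : <<s @prod_gen R d dX Xi >> `<=` S by move/(_ A HA).
apply: smallest_sub.
  split.
  - by rewrite /S /= (_ : [set xi | _] = set0) //; apply/seteqP; split => x //=.
  - move=> B; rewrite /S /= => mB.
    rewrite (_ : [set xi | (setT `\` B) (xi, w)] = ~` [set xi | B (xi, w)]).
      exact: measurableC.
    by apply/seteqP; split => x /=; rewrite /setD /=; [case|split].
  - move=> F mF; rewrite /S /=.
    rewrite (_ : [set xi | (\bigcup_k F k) (xi, w)] = \bigcup_k [set xi | F k (xi, w)]).
      by apply: bigcupT_measurable => k; exact: mF.
    by apply/seteqP; split => x /=; case=> k _ h; exists k.
move=> _ [A0 mA0 [B0 _ <-]]; rewrite /S /=.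
have [Bw|nBw] := pselect (B0 w).
  rewrite (_ : [set xi | (A0 `*` B0) (xi, w)] = A0) //.
  by apply/seteqP; split => x /=; [case|split].
rewrite (_ : [set xi | (A0 `*` B0) (xi, w)] = set0) //.
by apply/seteqP; split => x //=; case.
Qed.

Lemma G_meas (G : 'rV[R]_d -> Xi -> 'rV[R]_d) :
  (forall (i : 'I_d) (B : set R), measurable B ->
        <<s @prod_gen R d dX Xi >>
          ((fun p : Xi * 'rV[R]_d => G p.2 p.1 ord0 i) @^-1` B)) ->
  forall w i, measurable_fun setT (fun xi => G w xi ord0 i).
Proof.
move=> HG w i _ Y mY; rewrite setTI.
exact (section_meas _ (HG i Y mY) w).
Qed.

End Sections.


Section IntB.
Context (R : realType) (d : nat) (dX : measure_display) (Xi : measurableType dX)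
  (mu : probability Xi R).

Lemma int_B (Gw : Xi -> 'rV[R]_d) (g0 A : 'rV[R]_d) (b0 b1 sigma : R) :
  (forall i, measurable_fun setT (fun xi => Gw xi ord0 i)) ->
  (forall i : 'I_d, mu.-integrable setT (fun xi => (Gw xi ord0 i)%:E) /\
        (\int[mu]_xi (Gw xi ord0 i)%:E = (g0 ord0 i)%:E)%E) ->
  (\int[mu]_xi (sqnorm (Gw xi - g0))%:E <= (sigma ^+ 2)%:E)%E ->
  0 <= b1 ->
  (\int[mu]_xi (b0 + dotv A (Gw xi - g0) + b1 * sqnorm (Gw xi - g0))%:E
     <= (b0 + b1 * sigma ^+ 2)%:E)%E.
Proof.
move=> HM HI HV b10.
pose e := fun (i : 'I_d) xi => Gw xi ord0 i - g0 ord0 i.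
have mT : measurable (setT : set Xi) by [].
have icst : forall k : R, mu.-integrable setT (fun _ : Xi => k%:E).
  by move=> k; exact: finite_measure_integrable_cst.
have ie : forall i, mu.-integrable setT (fun xi => (e i xi)%:E).
  move=> i; have := integrableB mT (HI i).1 (icst (g0 ord0 i)).
  by apply: (eq_integrable mT) => x _.
have Ie : forall i, (\int[mu]_xi (e i xi)%:E = 0)%E.
  move=> i; rewrite /e.
  under eq_integral do rewrite EFinB.
  rewrite integralB_EFin //; last exact: icst.
    rewrite (HI i).2 integral_cst // [X in (_ * X)%E](_ : _ = 1%E); last exact: probability_setT.
    by rewrite mule1 subee.
  exact: (HI i).1.
have Lin : forall xi, dotv A (Gw xi - g0) = \sum_(i < d) A ord0 i * e i xi.
  by move=> xi; apply: eq_bigr => i _; rewrite !mxE.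
have Nf : forall xi, sqnorm (Gw xi - g0) = \sum_(i < d) e i xi * e i xi.
  by move=> xi; apply: eq_bigr => i _; rewrite !mxE.
have iLin : mu.-integrable setT (fun xi => (dotv A (Gw xi - g0))%:E).
  have := integrable_sum mT (enum 'I_d) (P := xpredT)
     (h := fun i xi => ((A ord0 i)%:E * (e i xi)%:E)%E)
     (fun i _ => integrableZl mT (A ord0 i) (ie i)).
  apply: (eq_integrable mT) => x _; rewrite Lin -sumEFin big_enum /=.
  by apply: eq_bigr.
have ILin : (\int[mu]_xi (dotv A (Gw xi - g0))%:E = 0)%E.
  under eq_integral do rewrite Lin -sumEFin.
  rewrite integral_sum //; last first.
    by move=> i; have := integrableZl mT (A ord0 i) (ie i); apply: (eq_integrable mT).
  rewrite big1 // => i _.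
  under eq_integral do rewrite EFinM.
  by rewrite integralZl // Ie mule0.
have mN : measurable_fun setT (fun xi => sqnorm (Gw xi - g0)).
  rewrite (_ : (fun xi => _) = (fun xi => \sum_(i <- enum 'I_d) e i xi * e i xi)); last first.
    by apply: funext => xi; rewrite Nf big_enum.
  apply: measurable_sum => i.
  have me : measurable_fun setT (e i).
    by apply: measurable_realfun.measurable_funB => //; exact: measurable_cst.
  exact: measurable_realfun.measurable_funM.
have iN : mu.-integrable setT (fun xi => (sqnorm (Gw xi - g0))%:E).
  apply/integrableP; split; first exact/measurable_realfun.measurable_EFinP.
  under eq_integral do rewrite gee0_abs ?lee_fin ?sqnorm_ge0 //.
  by apply: le_lt_trans HV _; rewrite ltry.
under eq_integral do rewrite EFinD EFinD EFinM.
rewrite integralD //; last exact: integrableZl.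
  rewrite (integralD mT (icst b0) iLin).
  rewrite integral_cst // [X in (_ * X)%E](_ : _ = 1%E); last exact: probability_setT.
  rewrite mule1 ILin adde0 integralZl //.
  rewrite EFinD leeD2l // EFinM; exact: lee_wpmul2l.
exact: integrableD (icst b0) iLin.
Qed.

End IntB.


Section Core.
Context (R : realType) (d : nat) (dX : measure_display) (Xi : measurableType dX)
  (mu : probability Xi R).
Variables (f : 'rV[R]_d -> R) (gradf : 'rV[R]_d -> 'rV[R]_d) (G : 'rV[R]_d -> Xi -> 'rV[R]_d).
Variables (L infF sigma alpha gamma : R) (k : nat).
Hypotheses (L0 : 0 < L) (HL : L_smooth L f gradf) (Hinf : forall x, infF <= f x)
  (HM : forall w i, measurable_fun setT (fun xi => G w xi ord0 i))
  (HI : forall (w : 'rV[R]_d) (i : 'I_d),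
        mu.-integrable setT (fun xi => (G w xi ord0 i)%:E) /\
        (\int[mu]_xi (G w xi ord0 i)%:E = (gradf w ord0 i)%:E)%E)
  (HV : forall w : 'rV[R]_d,
        (\int[mu]_xi (sqnorm (G w xi - gradf w))%:E <= (sigma ^+ 2)%:E)%E)
  (k1 : (1 <= k)%N) (a0 : 0 < alpha) (a1le : alpha <= 1) (g0 : 0 < gamma)
  (C1 : 8 * L * gamma <= 1) (C2 : 4 * (k.-1)%:R * gamma * L * (1 - alpha) <= 1).

Let K1 : R := (k.-1)%:R.
Let a1 : R := 1 - alpha.
Let X : R := 2 * alpha * L ^+ 2 * a1 ^+ 2.
Let beta (j : nat) : R := (k - j)%:R * gamma * X.
Let Phi (s : 'rV[R]_d * 'rV[R]_d) (m : nat) : R :=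
  f (s.1 + alpha *: (s.2 - s.1)) - infF + beta (m %% k) * sqnorm (s.2 - s.1).
Let c : R := alpha * gamma / 4.
Let nu : R := gamma ^+ 2 * sigma ^+ 2 * (L * alpha ^+ 2 + K1 * gamma * X).

Let X0 : 0 <= X.
Proof. rewrite /X; apply: mulr_ge0; last exact: sqr_ge0. by rewrite mulr_ge0 ?sqr_ge0 // mulr_ge0 // ltW. Qed.

Let beta_ge0 j : 0 <= beta j.
Proof. by rewrite /beta mulr_ge0 // mulr_ge0 // ltW. Qed.

Let beta_le j : (1 <= j)%N -> beta j <= K1 * gamma * X.
Proof.
move=> j1; rewrite /beta /K1 -!mulrA; apply: ler_wpM2r.
  by rewrite mulr_ge0 // ltW.
by rewrite ler_nat -subn1 leq_sub2l.
Qed.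

Let beta_S r : (r < k)%N -> beta r = beta r.+1 + gamma * X.
Proof.
move=> rk; rewrite /beta subnS -[(k - r)%N]prednK ?subn_gt0 //=.
by rewrite -addn1 natrD; ring.
Qed.

Let Phi_ge0 s m : 0 <= Phi s m.
Proof.
rewrite /Phi addrC; apply: addr_ge0; last by rewrite subr_ge0.
by rewrite mulr_ge0 // sqnorm_ge0.
Qed.

Let c0 : 0 < c.
Proof. by rewrite /c divr_gt0 // mulr_gt0. Qed.


Let bp (m : nat) : R := beta (m %% k).+1.
Let uu (s : 'rV[R]_d * 'rV[R]_d) := s.2 - s.1.
Let pp (s : 'rV[R]_d * 'rV[R]_d) := s.1 + alpha *: (s.2 - s.1).
Let b0 m s : R := f (pp s) - infF - alpha * gamma * dotv (gradf (pp s)) (gradf s.2)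
  + L * (alpha * gamma) ^+ 2 * sqnorm (gradf s.2) + bp m * sqnorm (uu s - gamma *: gradf s.2).
Let Av m s : 'rV[R]_d := (- (alpha * gamma)) *: gradf (pp s) + (2 * L * (alpha * gamma) ^+ 2) *: gradf s.2
  - (2 * bp m * gamma) *: (uu s - gamma *: gradf s.2).
Let b1 m : R := L * (alpha * gamma) ^+ 2 + bp m * gamma ^+ 2.

Let sqnorm0 : sqnorm (0 : 'rV[R]_d) = 0.
Proof. by rewrite /sqnorm /dotv big1 // => i _; rewrite mxE mul0r. Qed.

Let vecid1 (s : 'rV[R]_d * 'rV[R]_d) (g : 'rV[R]_d) :
  s.1 + alpha *: (s.2 - gamma *: g - s.1) = pp s + (- (alpha * gamma)) *: g.
Proof.
by rewrite /pp addrAC scalerBr addrA scalerA scaleNr.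
Qed.

Let vecid2 (s : 'rV[R]_d * 'rV[R]_d) (g : 'rV[R]_d) :
  s.2 - gamma *: g - s.1 = uu s - gamma *: g.
Proof. by rewrite /uu addrAC. Qed.

Let step_pt m s xi :
  Phi (la_step G k alpha gamma m s xi) m.+1 <=
  b0 m s + dotv (Av m s) (G s.2 xi - gradf s.2) + b1 m * sqnorm (G s.2 xi - gradf s.2).
Proof.
set g := G s.2 xi; set gr := gradf s.2; set e := g - gr.
have ge : g = gr + e by rewrite /e addrC subrK.
have HA : Phi (la_step G k alpha gamma m s xi) m.+1 <=
    f (pp s + (- (alpha * gamma)) *: g) - infF + bp m * sqnorm (uu s - gamma *: g).
  rewrite /Phi /la_step /=; case: ifP => Hdiv /=.
    rewrite subrr scaler0 addr0 sqnorm0 mulr0 addr0 -/g vecid1.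
    by rewrite lerDl; apply: mulr_ge0; [exact: beta_ge0|exact: sqnorm_ge0].
  by rewrite modnS Hdiv -/g vecid1 vecid2.
apply: le_trans HA _.
have HB := @descent R d L f gradf (pp s) ((- (alpha * gamma)) *: g) HL L0.
apply: le_trans (lerD (lerD HB (lexx _)) (lexx _)) _.
rewrite le_eqVlt; apply/orP; left; apply/eqP.
have E3 : uu s - gamma *: g = (uu s - gamma *: gr) - gamma *: e.
  by rewrite ge scalerDr opprD addrA.
rewrite E3 ge /b0 /Av /b1 -/gr.
set gp := gradf (pp s); set v1 := uu s - gamma *: gr.
rewrite (dotvZr (- (alpha * gamma)) (gr + e) gp) (dotvDr gr e gp).
rewrite (sqnormZ (- (alpha * gamma)) (gr + e)) (sqnormD gr e).
rewrite (sqnormB v1 (gamma *: e)) (sqnormZ gamma e) (dotvZr gamma e v1).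
rewrite (dotvBl ((- (alpha * gamma)) *: gp + (2 * L * (alpha * gamma) ^+ 2) *: gr)
   ((2 * bp m * gamma) *: v1) e).
rewrite (dotvDl ((- (alpha * gamma)) *: gp) ((2 * L * (alpha * gamma) ^+ 2) *: gr) e).
rewrite (dotvZl (- (alpha * gamma)) gp e) (dotvZl (2 * L * (alpha * gamma) ^+ 2) gr e).
rewrite (dotvZl (2 * bp m * gamma) v1 e).
ring.
Qed.

Let det_bound m s : b0 m s + b1 m * sigma ^+ 2 <= Phi s m - c * sqnorm (gradf s.2) + nu.
Proof.
set gr := gradf s.2; set gp := gradf (pp s); set u := uu s.
set n := sqnorm gr; set q := sqnorm u; set iu := dotv u gr.
set dd := dotv (gp - gr) gr; set na := sqnorm (gp - gr).
set r := (m %% k)%N.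
have rk : (r < k)%N by rewrite /r ltn_pmod.
have Eb : beta r = bp m + gamma * X by rewrite /bp -/r; exact: beta_S.
have bp0 : 0 <= bp m by exact: beta_ge0.
have bpK : bp m <= K1 * gamma * X by exact: beta_le.
have n0 : 0 <= n by exact: sqnorm_ge0.
have q0 : 0 <= q by exact: sqnorm_ge0.
have Edot : dotv gp gr = n + dd by rewrite /dd (dotvBl gp gr gr); rewrite /n /sqnorm; ring.
have Esq : sqnorm (u - gamma *: gr) = q - 2 * gamma * iu + gamma ^+ 2 * n.
  by rewrite (sqnormB u (gamma *: gr)) (sqnormZ gamma gr) (dotvZr gamma gr u) -/q -/n -/iu; ring.
have Hna : na <= L ^+ 2 * (a1 ^+ 2 * q).
  have := lip_sq L f gradf (pp s) s.2 HL (ltW L0).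
  have -> : pp s - s.2 = (- a1) *: u.
    rewrite /pp /u /uu /a1 scaleNr scalerBl scale1r opprB.
    by rewrite opprB addrAC addrC.
  by rewrite (sqnormZ (- a1) u) sqrrN.
have key1 := dotv_key 1 (1 / 2) (gp - gr) gr.
rewrite -/na -/dd -/n expr1n mul1r mul1r in key1.
have key2 := dotv_key (4 * bp m) alpha u gr.
rewrite -/q -/iu -/n in key2.
have a10 : 0 <= a1 by rewrite /a1 subr_ge0.
have K10 : 0 <= K1 by rewrite /K1 ler0n.
have KK : K1 <= K1 ^+ 2.
  rewrite /K1 -natrX ler_nat; case: (k.-1) => // j; rewrite expnS leq_pmulr //.
have L0' : 0 <= L := ltW L0.
have H2 : 2 * bp m <= alpha * L * a1.
  have : 2 * K1 * gamma * L * a1 <= 1 / 2 by move: C2; rewrite -/K1 -/a1; lra.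
  move=> h; apply: le_trans (_ : 2 * (K1 * gamma * X) <= _).
    by rewrite ler_pM2l // ltr0n.
  rewrite /X.
  have -> : 2 * (K1 * gamma * (2 * alpha * L ^+ 2 * a1 ^+ 2)) =
            (alpha * L * a1) * (2 * (2 * K1 * gamma * L * a1)) by ring.
  rewrite -[X in _ <= X]mulr1; apply: ler_wpM2l.
    by rewrite mulr_ge0 // mulr_ge0 // ltW.
  lra.
have H1 : - (alpha * gamma * dd) <= alpha * gamma * (L ^+ 2 * (a1 ^+ 2 * q) + n / 4).
  rewrite -mulrN; apply: ler_wpM2l; first by rewrite mulr_ge0 // ltW.
  lra.
have H3 : - (2 * bp m * gamma * iu) <= gamma * (alpha * L ^+ 2 * a1 ^+ 2 * q + alpha * n / 4).
  have h16 : 16 * bp m ^+ 2 <= 4 * alpha ^+ 2 * L ^+ 2 * a1 ^+ 2.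
    have hh : (2 * bp m) ^+ 2 <= (alpha * L * a1) ^+ 2.
      have hb : 0 <= 2 * bp m by lra.
      rewrite !expr2; nra.
    move: hh; rewrite !exprMn; lra.
  have h8 : - (8 * alpha * bp m * iu) <= 4 * alpha ^+ 2 * L ^+ 2 * a1 ^+ 2 * q + alpha ^+ 2 * n.
    have : 16 * bp m ^+ 2 * q <= 4 * alpha ^+ 2 * L ^+ 2 * a1 ^+ 2 * q by apply: ler_wpM2r.
    move: key2; rewrite !exprMn; lra.
  have h2 : - (2 * bp m * iu) <= alpha * L ^+ 2 * a1 ^+ 2 * q + alpha * n / 4.
    rewrite -(ler_pM2l (_ : 0 < 4 * alpha)); last by rewrite mulr_gt0.
    move: h8; rewrite !expr2; lra.
  have := ler_wpM2l (ltW g0) h2; lra.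
have H4 : L * (alpha * gamma) ^+ 2 + bp m * gamma ^+ 2 <= alpha * gamma / 4.
  have h1 : L * (alpha * gamma) ^+ 2 <= alpha * gamma / 8.
    have : L * gamma * alpha <= 1 / 8.
      have hLg : L * gamma <= 1 / 8 by move: C1; rewrite -mulrA; lra.
      have : L * gamma * alpha <= L * gamma by rewrite ler_piMr // mulr_ge0 // ltW.
      lra.
    move=> h; have ag : 0 <= alpha * gamma by rewrite mulr_ge0 // ltW.
    have -> : L * (alpha * gamma) ^+ 2 = (alpha * gamma) * (L * gamma * alpha) by ring.
    apply: le_trans (ler_wpM2l ag h) _; lra.
  have h2 : bp m * gamma ^+ 2 <= alpha * gamma / 8.
    apply: le_trans (_ : (K1 * gamma * X) * gamma ^+ 2 <= _).
      by apply: ler_wpM2r => //; exact: sqr_ge0.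
    have hk : K1 * (gamma * L * a1) ^+ 2 <= 1 / 16.
      apply: le_trans (_ : K1 ^+ 2 * (gamma * L * a1) ^+ 2 <= _).
        by apply: ler_wpM2r => //; exact: sqr_ge0.
      rewrite -exprMn.
      have : K1 * (gamma * L * a1) <= 1 / 4 by move: C2; rewrite -/K1 -/a1; lra.
      have : 0 <= K1 * (gamma * L * a1) by rewrite mulr_ge0 // mulr_ge0 // mulr_ge0 // ltW.
      move=> h0 h; rewrite expr2; nra.
    rewrite /X.
    have -> : K1 * gamma * (2 * alpha * L ^+ 2 * a1 ^+ 2) * gamma ^+ 2 =
              (alpha * gamma) * (2 * (K1 * (gamma * L * a1) ^+ 2)) by ring.
    have : 0 <= alpha * gamma by rewrite mulr_ge0 // ltW.
    move=> ag; have := ler_wpM2l ag (_ : 2 * (K1 * (gamma * L * a1) ^+ 2) <= 1 / 8).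
    move=> /(_ ltac:(lra)); lra.
  lra.
have H5 : b1 m * sigma ^+ 2 <= nu.
  rewrite /b1 /nu.
  have : L * (alpha * gamma) ^+ 2 + bp m * gamma ^+ 2 <=
         gamma ^+ 2 * (L * alpha ^+ 2 + K1 * gamma * X).
    have := ler_wpM2r (sqr_ge0 gamma) bpK; rewrite exprMn; lra.
  move=> h; have := ler_wpM2r (sqr_ge0 sigma) h; lra.
have H4n := ler_wpM2r n0 H4.
rewrite /b0 /Phi -/(pp s) -/(uu s) -/u -/gp -/gr -/r Eb Esq Edot -/q -/n.
rewrite /c.
move: H1 H3 H4n H5; rewrite /X; lra.
Qed.

Let hh := fun s : 'rV[R]_d * 'rV[R]_d => (sqnorm (gradf s.2))%:E.

Let la_ge0 n : forall m s, (0 <= la_expect mu G k alpha gamma hh n m s)%E.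
Proof.
elim: n => [|n IH] m s /=; first by rewrite /hh lee_fin sqnorm_ge0.
by apply: integral_ge0 => xi _; exact: IH.
Qed.

Let recur N : forall m s,
  (\sum_(j < N) la_expect mu G k alpha gamma hh j m s <= ((Phi s m + N%:R * nu) / c)%:E)%E.
Proof.
elim: N => [|N IH] m s.
  by rewrite big_ord0 lee_fin mul0r addr0 divr_ge0 // ltW.
rewrite big_ord_recl /=.
set F := fun (j : nat) xi => la_expect mu G k alpha gamma hh j m.+1 (la_step G k alpha gamma m s xi).
have E1 : (\sum_(i < N) la_expect mu G k alpha gamma hh (lift ord0 i) m s =
          \sum_(i < N) \int[mu]_xi F i xi)%E.
  by apply: eq_bigr => i _.
rewrite E1.
have S1 := @int_supersum R _ _ mu F N (fun j xi => la_ge0 j m.+1 _).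
set e := fun xi => G s.2 xi - gradf s.2.
pose B' := fun xi => (b0 m s + N%:R * nu) / c + dotv (c^-1 *: Av m s) (e xi) + (b1 m / c) * sqnorm (e xi).
have S2 : (\int[mu]_xi (\sum_(j < N) F j xi) <= \int[mu]_xi (B' xi)%:E)%E.
  apply: (@le_int_ge0 R _ _ mu) => [xi|xi]; first by apply: sume_ge0 => j _; exact: la_ge0.
  apply: le_trans (IH m.+1 (la_step G k alpha gamma m s xi)) _.
  rewrite lee_fin /B'.
  have := step_pt m s xi; rewrite -/(e xi) => hp.
  rewrite (dotvZl (c^-1) (Av m s) (e xi)).
  have -> : (b0 m s + N%:R * nu) / c + c^-1 * dotv (Av m s) (e xi) + b1 m / c * sqnorm (e xi)
        = (b0 m s + dotv (Av m s) (e xi) + b1 m * sqnorm (e xi) + N%:R * nu) / c.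
    by rewrite /c; field; apply/andP; split; rewrite gt_eqF.
  apply: ler_wpM2r; first by rewrite invr_ge0 ltW.
  lra.
have S3 : (\int[mu]_xi (B' xi)%:E <= ((b0 m s + N%:R * nu) / c + b1 m / c * sigma ^+ 2)%:E)%E.
  apply: (@int_B R d dX Xi mu (G s.2) (gradf s.2) _ _ _ sigma (HM s.2) (HI s.2) (HV s.2)).
  apply: divr_ge0; last exact: ltW c0.
  by rewrite /b1; apply: addr_ge0; apply: mulr_ge0; rewrite ?sqr_ge0 ?beta_ge0 ?(ltW L0).
apply: le_trans (leeD (lexx _) (le_trans S1 (le_trans S2 S3))) _.
rewrite /hh -EFinD lee_fin.
have D := det_bound m s.
have -> : sqnorm (gradf s.2) + ((b0 m s + N%:R * nu) / c + b1 m / c * sigma ^+ 2) =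
          (c * sqnorm (gradf s.2) + (b0 m s + b1 m * sigma ^+ 2) + N%:R * nu) / c.
  by rewrite /c; field; apply/andP; split; rewrite gt_eqF.
apply: ler_wpM2r; first by rewrite invr_ge0 ltW.
have -> : (N.+1)%:R = N%:R + 1 :> R by rewrite -addn1 natrD.
lra.
Qed.

Lemma core_bound (w0 : 'rV[R]_d) (T : nat) :
  (la_out_sqgrad mu G gradf k alpha gamma w0 T <=
   ((T%:R)^-1 * ((f w0 - infF + T%:R * (gamma ^+ 2 * sigma ^+ 2 *
      (L * alpha ^+ 2 + (k.-1)%:R * gamma * (2 * alpha * L ^+ 2 * (1 - alpha) ^+ 2))))
      / (alpha * gamma / 4)))%:E)%E.
Proof.
rewrite /la_out_sqgrad EFinM.
apply: lee_wpmul2l; first by rewrite lee_fin invr_ge0 ler0n.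
have := recur T 0 (w0, w0).
have -> : Phi (w0, w0) 0 = f w0 - infF.
  by rewrite /Phi /= subrr scaler0 addr0 sqnorm0 mulr0 addr0.
by [].
Qed.

End Core.


Section Arith.
Context (R : realType).
Variables (L Delta Delta' sigma alpha eps : R) (k : nat).
Hypotheses (L0 : 0 < L) (D0 : 0 <= Delta') (DD : Delta' <= Delta) (s0 : 0 <= sigma)
  (k1 : (1 <= k)%N) (a0 : 0 < alpha) (a1 : alpha <= 1) (e0 : 0 < eps).

Let K1 : R := (k.-1)%:R.
Let sK : R := Num.sqrt K1.
Let se : R := Num.sqrt eps.
Let S : R := 8 * L + 4 * K1 * L * (1 - alpha) + 12 * L * alpha * sigma ^+ 2 / eps
   + 5 * L * sigma * (1 - alpha) * sK / se.
Let gamma : R := S^-1.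

Let K10 : 0 <= K1. Proof. by rewrite /K1 ler0n. Qed.
Let sK0 : 0 <= sK. Proof. exact: sqrtr_ge0. Qed.
Let se0 : 0 < se. Proof. by rewrite /se sqrtr_gt0. Qed.
Let sKsq : sK ^+ 2 = K1. Proof. by rewrite /sK sqr_sqrtr. Qed.
Let sesq : se ^+ 2 = eps. Proof. by rewrite /se sqr_sqrtr // ltW. Qed.
Let a10 : 0 <= 1 - alpha. Proof. by rewrite subr_ge0. Qed.

Let t1 : 0 <= 4 * K1 * L * (1 - alpha).
Proof. by rewrite !mulr_ge0 // ltW. Qed.
Let t2 : 0 <= 12 * L * alpha * sigma ^+ 2 / eps.
Proof. by rewrite divr_ge0 ?(ltW e0) // !mulr_ge0 ?sqr_ge0 // ltW. Qed.
Let t3 : 0 <= 5 * L * sigma * (1 - alpha) * sK / se.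
Proof. by rewrite divr_ge0 ?(ltW se0) // !mulr_ge0 // ltW. Qed.

Let S_ge : 8 * L <= S.
Proof. by rewrite /S -!addrA lerDl !addr_ge0. Qed.
Let S0 : 0 < S.
Proof. by apply: lt_le_trans S_ge; rewrite mulr_gt0. Qed.
Let gS : gamma * S = 1.
Proof. by rewrite /gamma mulVf // gt_eqF. Qed.
Let g0 : 0 < gamma.
Proof. by rewrite /gamma invr_gt0. Qed.

Lemma arith_C1 : 8 * L * gamma <= 1.
Proof. have := ler_wpM2l (ltW g0) S_ge; rewrite gS; lra. Qed.

Let S_ge2 : 4 * K1 * L * (1 - alpha) <= S.
Proof. rewrite /S; have := t1; have := t2; have := t3; have := ltW L0; lra. Qed.

Lemma arith_g0 : 0 < gamma. Proof. exact: g0. Qed.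

Lemma arith_C2 : 4 * (k.-1)%:R * gamma * L * (1 - alpha) <= 1.
Proof. have := ler_wpM2l (ltW g0) S_ge2; rewrite gS -/K1; lra. Qed.

Let S_ge3 : 12 * L * alpha * sigma ^+ 2 <= eps * S.
Proof.
have h : 12 * L * alpha * sigma ^+ 2 / eps <= S.
  by rewrite /S; have := t1; have := t2; have := t3; have := ltW L0; lra.
have := ler_wpM2l (ltW e0) h.
have -> : eps * (12 * L * alpha * sigma ^+ 2 / eps) = 12 * L * alpha * sigma ^+ 2.
  by field; rewrite gt_eqF.
by [].
Qed.

Let S_ge4 : 25 * L ^+ 2 * sigma ^+ 2 * (1 - alpha) ^+ 2 * K1 <= eps * S ^+ 2.
Proof.
set x := 5 * L * sigma * (1 - alpha) * sK / se.
have x0 : 0 <= x by exact: t3.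
have xS : x <= S by rewrite /S -/x; have := t1; have := t2; have := t3; have := ltW L0; lra.
have : x ^+ 2 <= S ^+ 2 by rewrite !expr2; nra.
have -> : x ^+ 2 = 25 * L ^+ 2 * sigma ^+ 2 * (1 - alpha) ^+ 2 * K1 / eps.
  rewrite /x -sKsq -sesq; field; do ?[apply/andP; split]; rewrite gt_eqF // .
move=> h; have := ler_wpM2l (ltW e0) h.
have -> : eps * (25 * L ^+ 2 * sigma ^+ 2 * (1 - alpha) ^+ 2 * K1 / eps) =
  25 * L ^+ 2 * sigma ^+ 2 * (1 - alpha) ^+ 2 * K1 by field; rewrite gt_eqF.
by [].
Qed.

Lemma arith_final (T : nat) : 12 * Delta * S / (alpha * eps) < T%:R ->
  (T%:R)^-1 * ((Delta' + T%:R * (gamma ^+ 2 * sigma ^+ 2 *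
      (L * alpha ^+ 2 + (k.-1)%:R * gamma * (2 * alpha * L ^+ 2 * (1 - alpha) ^+ 2))))
      / (alpha * gamma / 4)) <= eps.
Proof.
move=> hT.
have T0 : 0 < T%:R :> R.
  have Dl : 0 <= Delta by exact: le_trans D0 DD.
  apply: le_lt_trans hT; apply: divr_ge0.
    by rewrite mulr_ge0 ?(ltW S0) // mulr_ge0.
  by rewrite mulr_ge0 // ltW.
rewrite -/K1.
have -> : (T%:R)^-1 * ((Delta' + T%:R * (gamma ^+ 2 * sigma ^+ 2 *
      (L * alpha ^+ 2 + K1 * gamma * (2 * alpha * L ^+ 2 * (1 - alpha) ^+ 2))))
      / (alpha * gamma / 4)) =
   4 * Delta' / (alpha * gamma * T%:R) + 4 * (L * alpha * sigma ^+ 2 * gamma)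
     + 8 * (K1 * L ^+ 2 * (1 - alpha) ^+ 2 * sigma ^+ 2 * gamma ^+ 2).
  by field; rewrite !gt_eqF.
have hA : 4 * Delta' / (alpha * gamma * T%:R) <= eps / 3.
  have z0 : 0 < alpha * gamma * T%:R by rewrite !mulr_gt0.
  rewrite ler_pdivrMr //.
  have h1 : 12 * Delta * S < alpha * eps * T%:R.
    by have := hT; rewrite ltr_pdivrMr ?mulr_gt0 //; lra.
  have h2 : 12 * Delta * S * gamma <= alpha * eps * T%:R * gamma.
    by apply: ler_wpM2r; [exact: ltW|exact: ltW].
  have h3 : Delta * (S * gamma) = Delta by rewrite [S * gamma]mulrC gS mulr1.
  move: h2; rewrite -!mulrA h3.
  move=> h; have := DD => hd; lra.
have hB : 4 * (L * alpha * sigma ^+ 2 * gamma) <= eps / 3.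
  have := ler_wpM2r (ltW g0) S_ge3.
  rewrite -[eps * S * gamma]mulrA [S * gamma]mulrC gS mulr1 => h; lra.
have hC : 8 * (K1 * L ^+ 2 * (1 - alpha) ^+ 2 * sigma ^+ 2 * gamma ^+ 2) <= eps / 3.
  have := ler_wpM2r (sqr_ge0 gamma) S_ge4.
  rewrite -[eps * S ^+ 2 * gamma ^+ 2]mulrA -exprMn [S * gamma]mulrC gS expr1n mulr1 => h.
  have hp : 0 <= K1 * L ^+ 2 * (1 - alpha) ^+ 2 * sigma ^+ 2 * gamma ^+ 2.
    apply: mulr_ge0; last exact: sqr_ge0.
    apply: mulr_ge0; last exact: sqr_ge0.
    apply: mulr_ge0; last exact: sqr_ge0.
    by apply: mulr_ge0; [exact: K10|exact: sqr_ge0].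
  lra.
lra.
Qed.

Lemma arith_gt : 12 * Delta * S / (alpha * eps) < ((Num.trunc (12 * Delta * S / (alpha * eps))).+1)%:R.
Proof. exact: truncnS_gt. Qed.

Lemma arith_T :
  ((Num.trunc (12 * Delta * S / (alpha * eps))).+1)%:R
    <= (144 * L * Delta + 1) * la_bound sigma eps alpha k + 1.
Proof.
have Dl : 0 <= Delta by exact: le_trans D0 DD.
set Y := 12 * Delta * S / (alpha * eps).
have Y0 : 0 <= Y.
  apply: divr_ge0; first by rewrite mulr_ge0 ?(ltW S0) // mulr_ge0.
  by rewrite mulr_ge0 // ltW.
have hY : ((Num.trunc Y).+1)%:R <= Y + 1 :> R.
  rewrite -addn1 natrD lerD2r; by rewrite truncn_le.
pose rho := (1 - alpha) / alpha.
pose x1 := sigma ^+ 2 / eps ^+ 2.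
pose x2 := eps^-1.
pose x3 := sigma * sK / (eps * se).
pose x4 := k%:R / eps.
have Elb : la_bound sigma eps alpha k = x1 + x2 + rho * (x3 + x4) by [].
have ES : S / (alpha * eps) = 8 * L * (1 + rho) * x2 + 4 * L * rho * K1 * x2 + 12 * L * x1 + 5 * L * rho * x3.
  rewrite /S /rho /x1 /x2 /x3; field.
  by do ?[apply/andP; split]; rewrite gt_eqF.
have rho0 : 0 <= rho by rewrite /rho divr_ge0 // ltW.
have x10 : 0 <= x1 by rewrite /x1 divr_ge0 ?sqr_ge0.
have x20 : 0 <= x2 by rewrite /x2 invr_ge0 ltW.
have x30 : 0 <= x3 by rewrite /x3 divr_ge0 ?mulr_ge0 // ltW.
have k1R : 1 <= k%:R :> R by rewrite ler1n.
have K1k : K1 <= k%:R by rewrite /K1 ler_nat leq_pred.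
have h24 : x2 <= x4.
  by rewrite /x2 /x4 -[X in X <= _]mul1r; apply: ler_wpM2r.
have hK4 : K1 * x2 <= x4.
  by rewrite /x2 /x4; apply: ler_wpM2r.
have Lr0 : 0 <= L * rho by rewrite mulr_ge0 // ltW.
have p1 := ler_wpM2l Lr0 h24.
have p2 := ler_wpM2l Lr0 hK4.
have p3 : 0 <= L * x2 by rewrite mulr_ge0 // ltW.
have p4 : 0 <= L * rho * x3 by rewrite mulr_ge0.
have hS : S / (alpha * eps) <= 12 * L * la_bound sigma eps alpha k.
  rewrite ES Elb; lra.
have hY2 : Y <= 144 * L * Delta * la_bound sigma eps alpha k.
  rewrite /Y -mulrA.
  have := ler_wpM2l (_ : 0 <= 12 * Delta) hS.
  rewrite mulr_ge0 // => /(_ isT) h; lra.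
have lb0 : 0 <= la_bound sigma eps alpha k.
  rewrite Elb; apply: addr_ge0; first exact: addr_ge0.
  apply: mulr_ge0 => //; apply: addr_ge0 => //.
  by rewrite /x4 divr_ge0 ?ler0n // ltW.
lra.
Qed.

End Arith.


Theorem theorem1 (R : realType) (L Delta : R) :
  0 < L -> 0 <= Delta ->
  exists C : R, 0 < C /\
  forall (d : nat) (f : 'rV[R]_d -> R) (gradf : 'rV[R]_d -> 'rV[R]_d)
         (w0 : 'rV[R]_d)
         (dX : measure_display) (Xi : measurableType dX) (mu : probability Xi R)
         (G : 'rV[R]_d -> Xi -> 'rV[R]_d) (sigma : R) (k : nat) (alpha eps : R),
    L_smooth L f gradf ->
    has_lbound (range f) ->
    f w0 - inf (range f) <= Delta ->
    (forall (i : 'I_d) (B : set R), measurable B ->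
        <<s @prod_gen R d dX Xi >>
          ((fun p : Xi * 'rV[R]_d => G p.2 p.1 ord0 i) @^-1` B)) ->
    (forall (w : 'rV[R]_d) (i : 'I_d),
        mu.-integrable setT (fun xi => (G w xi ord0 i)%:E) /\
        (\int[mu]_xi (G w xi ord0 i)%:E = (gradf w ord0 i)%:E)%E) ->
    0 <= sigma ->
    (forall w : 'rV[R]_d,
        (\int[mu]_xi (sqnorm (G w xi - gradf w))%:E <= (sigma ^+ 2)%:E)%E) ->
    (1 <= k)%N -> 0 < alpha <= 1 -> 0 < eps ->
    exists (gamma : R) (T : nat),
      0 < gamma /\ (0 < T)%N /\
      T%:R <= C * la_bound sigma eps alpha k + 1 /\
      (la_out_sqgrad mu G gradf k alpha gamma w0 T <= eps%:E)%E.
Proof.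
move=> L0 D0.
exists (144 * L * Delta + 1); split.
  have : 0 <= 144 * L * Delta by rewrite mulr_ge0 // mulr_ge0 // ltW.
  lra.
move=> d f gradf w0 dX Xi mu G sigma k alpha eps HL Hlb Hgap HG HI s0 HV k1 /andP[a0 a1] e0.
set infF := inf (range f).
have Hinf : forall x, infF <= f x.
  by move=> x; apply: (ge_inf Hlb); exists x.
have HM := @G_meas R d dX Xi G HG.
have D0' : 0 <= f w0 - infF by rewrite subr_ge0.
set S := 8 * L + 4 * (k.-1)%:R * L * (1 - alpha) + 12 * L * alpha * sigma ^+ 2 / eps
   + 5 * L * sigma * (1 - alpha) * Num.sqrt (k.-1)%:R / Num.sqrt eps.
exists S^-1, (Num.trunc (12 * Delta * S / (alpha * eps))).+1.
have g0 := arith_g0 R L sigma alpha eps k L0 s0 a0 a1 e0.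
have C1 := arith_C1 R L sigma alpha eps k L0 s0 a0 a1 e0.
have C2 := arith_C2 R L sigma alpha eps k L0 s0 a0 a1 e0.
split; first exact g0.
split; first by [].
split; first exact (arith_T R L Delta (f w0 - infF) sigma alpha eps k L0 D0' Hgap s0 k1 a0 a1 e0).
apply: le_trans (core_bound R d dX Xi mu f gradf G L infF sigma alpha _ k L0 HL Hinf HM HI HV k1 a0 a1
   g0 C1 C2 w0 _) _.
rewrite lee_fin.
exact (arith_final R L Delta (f w0 - infF) sigma alpha eps k L0 D0' Hgap s0 a0 a1 e0 _
   (arith_gt R L Delta sigma alpha eps k)).
Qed.
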